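(* Let $S=(\mathcal{E},\Sigma,X,\mathcal{O})$ be a d-classical entity, so each $O(e,p)=\{x(e,p)\}$ is a singleton. Then for every $A\subseteq X$: $eig(A)=\{(e,p):x(e,p)\in A\}$, and $eig(X\setminus A)=(\mathcal{E}\times\Sigma)\setminus eig(A)=eig(A)^\perp$. Moreover $\mathcal{Y}_{eig}=\mathcal{Y}_{orth}$.
   Context: An entity $S=(\mathcal{E},\Sigma,X,\mathcal{O})$ consists of sets $\mathcal{E},\Sigma$ and for each $e\in\mathcal{E},p\in\Sigma$ a nonempty set $O(e,p)$, with $X=\bigcup O(e,p)$. It is d-classical iff every $O(e,p)$ is a singleton. The central eigen map is $(e,p)\in eig(A)\iff O(e,p)\subseteq A$; $\mathcal{Y}_{eig}=\{eig(A):A\subseteq X\}$. On $\mathcal{E}\times\Sigma$, $(e,p)\perp(f,q)$ iff $O(e,p)\cap O(f,q)=\emptyset$; for $K\subseteq\mathcal{E}\times\Sigma$, $K^\perp=\{a: a\perp b\text{ for all } b\in K\}$; $\mathcal{Y}_{orth}$ is the set of $K$ with $K=(K^\perp)^\perp$. *)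

(* Defs.v *)
From mathcomp Require Import all_boot.
From mathcomp Require Export classical_sets.
Set Implicit Arguments. Unset Strict Implicit. Unset Printing Implicit Defensive.
Local Open Scope classical_set_scope.

Definition is_entity (E Sg X : Type) (O : E -> Sg -> set X) : Prop :=
  (forall e p, O e p !=set0) /\ (forall x : X, exists e p, O e p x).

Definition d_classical (E Sg X : Type) (O : E -> Sg -> set X) : Prop :=
  forall e p, exists x : X, O e p = [set x].

Definition eig (E Sg X : Type) (O : E -> Sg -> set X) (A : set X) : set (E * Sg) :=
  [set ep | O ep.1 ep.2 `<=` A].

Definition orth (E Sg X : Type) (O : E -> Sg -> set X) (a b : E * Sg) : Prop :=
  O a.1 a.2 `&` O b.1 b.2 = set0.

Definition perp (E Sg X : Type) (O : E -> Sg -> set X) (K : set (E * Sg)) : set (E * Sg) :=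
  [set a | forall b, K b -> orth O a b].

Definition Y_eig (E Sg X : Type) (O : E -> Sg -> set X) : set (set (E * Sg)) :=
  [set K | exists A : set X, K = eig O A].

Definition Y_orth (E Sg X : Type) (O : E -> Sg -> set X) : set (set (E * Sg)) :=
  [set K | K = perp O (perp O K)].

(* Main.v *)
Require Import Defs.
From mathcomp Require Import all_boot classical_sets boolp.
Set Implicit Arguments.
Local Open Scope classical_set_scope.

Section H.
Variables (E Sg X : Type) (O : E -> Sg -> set X) (x : E -> Sg -> X).
Hypothesis Hx : forall e p, O e p = [set x e p].

Lemma eigE A : eig O A = [set ep | A (x ep.1 ep.2)].
Proof.
apply/seteqP; split=> -[e p] /=; rewrite /eig /= Hx.
- by move=> H; apply: H.
- by move=> H y ->.
Qed.

Lemma orthE a b : orth O a b <-> x a.1 a.2 <> x b.1 b.2.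
Proof.
rewrite /orth !Hx; split.
- move=> H E'; have : ([set x a.1 a.2] `&` [set x b.1 b.2]) (x a.1 a.2) by split.
  by rewrite H.
- move=> N; apply/seteqP; split=> y //= [-> ]; done.
Qed.

Lemma perpE L : perp O L = eig O (~` [set y | exists b, L b /\ y = x b.1 b.2]).
Proof.
rewrite eigE; apply/seteqP; split=> a /=.
- move=> H [b [Lb eb]]; by move/orthE: (H b Lb).
- by move=> H b Lb; apply/orthE => eb; apply: H; exists b.
Qed.

Lemma eigC A : eig O (~` A) = ~` eig O A.
Proof. by rewrite !eigE; apply/seteqP; split=> a. Qed.

Lemma perp_eig A : ~` eig O A = perp O (eig O A).
Proof.
rewrite eigE perpE eigE; apply/seteqP; split=> a /=.
- by move=> H [b [Ab eb]]; apply: H; rewrite eb.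
- by move=> H Aa; apply: H; exists a.
Qed.
End H.

Theorem mainTheorem8 (E Sg X : Type) (O : E -> Sg -> set X) :
  is_entity O -> d_classical O ->
  (forall x : E -> Sg -> X, (forall e p, O e p = [set x e p]) ->
     forall A : set X, eig O A = [set ep | A (x ep.1 ep.2)]) /\
  (forall A : set X, eig O (~` A) = ~` eig O A /\ ~` eig O A = perp O (eig O A)) /\
  Y_eig O = Y_orth O.
Proof.
move=> _ dc.
have [x Hx] : exists x : E -> Sg -> X, forall e p, O e p = [set x e p].
  have H1 : forall e, exists f : Sg -> X, forall p, O e p = [set f p].
    by move=> e; have [f Hf] := @choice Sg X (fun p y => O e p = [set y]) (dc e); exists f.
  have [x Hx] := @choice E (Sg -> X) (fun e f => forall p, O e p = [set f p]) H1.
  by exists x.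
split; first by move=> y Hy A; apply: eigE.
have C : forall A : set X, eig O (~` A) = ~` eig O A /\ ~` eig O A = perp O (eig O A).
  move=> A; split; [idtac | exact (@perp_eig _ _ _ O x Hx A)]. exact (@eigC _ _ _ O x Hx A).
split=> //.
apply/seteqP; split=> K /=.
- move=> [A ->]; rewrite /Y_orth /=.
  by rewrite -(@perp_eig _ _ _ O x Hx) -(@eigC _ _ _ O x Hx) -(@perp_eig _ _ _ O x Hx) -(@eigC _ _ _ O x Hx) setCK.
- move=> HK; rewrite HK (@perpE _ _ _ O x Hx); eexists; reflexivity.
Qed.
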